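(* Let $\lambda$ be a partition with $\ell\geq 4$ positive parts, and let $n\geq\ell$. If $\lambda=(3^m,2,1^{\ell-m-1})$ for some $m\in\{1,\ldots,\ell-2\}$, then the poset $\mathcal B_\lambda^n$ is not a lattice.
   Context: Superscripts denote repeated parts, e.g. $(3^2,2,1)=(3,3,2,1)$. For $N\geq 1$ and a partition $\nu$ with at most $N$ positive parts, $\mathcal B_\nu^N$ is the set of semistandard Young tableaux of shape $\nu$ (rows weakly increasing, columns strictly increasing) with entries in $\{1,\ldots,N+1\}$, partially ordered by the reflexive transitive closure of $T<F_i(T)$ for $i\in\{1,\ldots,N\}$ with $F_i(T)\neq 0$. Here $F_i$ is the type A crystal lowering operator: in the reading word of $T$ (rows read from bottom to top, each row left to right) keep only letters $i$ and $i+1$, replace each $i$ by '')'' and each $i+1$ by ''('', and match parentheses in the usual way; if there is no unmatched '')'', $F_i(T)=0$; otherwise $F_i(T)$ is obtained by changing the entry $i$ corresponding to the rightmost unmatched '')'' into $i+1$. *)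

(* Defs.v *)
From Stdlib Require Import Relations.
From mathcomp Require Import all_boot.
Set Implicit Arguments. Unset Strict Implicit. Unset Printing Implicit Defensive.

(* A tableau is a list of rows (top row first), each row a list of entries. *)
Definition tableau := seq (seq nat).

Definition is_partition (nu : seq nat) : bool :=
  sorted geq nu && all (fun x => 0 < x) nu.

(* semistandard Young tableau of shape nu, entries in {1,...,N+1} *)
Definition is_ssyt (N : nat) (nu : seq nat) (T : tableau) : bool :=
  [&& map size T == nu,
      all (fun r => sorted leq r) T,
      all (fun r => all (fun x => (1 <= x) && (x <= N.+1)) r) T &
      all (fun k => all (fun j => nth 0 (nth [::] T k) j < nth 0 (nth [::] T k.+1) j)
                        (iota 0 (size (nth [::] T k.+1))))
          (iota 0 (size T).-1)].

Definition B (N : nat) (nu : seq nat) : pred tableau := fun T => is_ssyt N nu T.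

Definition reading_word (T : tableau) : seq nat := flatten (rev T).

(* position (in the word) of the rightmost unmatched ")" = letter i, where
   i+1 is "(" and i is ")"; [op] counts currently unmatched "(" . *)
Fixpoint rum_pos (i : nat) (w : seq nat) (k op : nat) (acc : option nat)
  : option nat :=
  match w with
  | [::] => acc
  | x :: w' =>
      if x == i then
        (if 0 < op then rum_pos i w' k.+1 op.-1 acc
         else rum_pos i w' k.+1 op (Some k))
      else if x == i.+1 then rum_pos i w' k.+1 op.+1 acc
      else rum_pos i w' k.+1 op acc
  end.

(* crystal lowering operator F_i; None stands for 0 *)
Definition F (i : nat) (T : tableau) : option tableau :=
  let w := reading_word T in
  match rum_pos i w 0 0 None with
  | None => None
  | Some p => Some (rev (reshape (map size (rev T)) (set_nth 0 w p i.+1)))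
  end.

Definition step (N : nat) : relation tableau :=
  fun T U => exists i, 1 <= i <= N /\ F i T = Some U.

Definition le_B (N : nat) : relation tableau := clos_refl_trans tableau (step N).

Definition is_lattice (P : pred tableau) (le : relation tableau) : Prop :=
  forall T U, P T -> P U ->
    (exists J, [/\ P J, le T J, le U J &
                   forall V, P V -> le T V -> le U V -> le J V]) /\
    (exists M, [/\ P M, le M T, le M U &
                   forall V, P V -> le V T -> le V U -> le V M]).

(* Main.v *)
Require Import Defs.
From Stdlib Require Import Relations.
From mathcomp Require Import all_boot zify.
Set Implicit Arguments. Unset Strict Implicit. Unset Printing Implicit Defensive.

Lemma rum_pos_spec i w k op acc p :
  rum_pos i w k op acc = Some p ->
  acc = Some p \/ (k <= p < k + size w /\ nth 0 w (p - k) = i).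
Proof.
elim: w k op acc => [|x w IH] k op acc /=; first by left.
have H1 : forall k' op' acc', k' = k.+1 -> rum_pos i w k' op' acc' = Some p ->
  (acc' = Some p \/ (k <= p < k + size (x :: w) /\ nth 0 (x :: w) (p - k) = i)).
  move=> k' op' acc' -> /IH [->|[/andP [h1 h2] h3]]; first by left.
  right; split; first by apply/andP; split; [exact: ltnW | rewrite /= addnS -addSn].
  by rewrite -(subnSK h1) /=.
case: ifP => [/eqP xi|_].
  case: ifP => _ /(H1 _ _ _ erefl) [E|]; try by [left|right].
  case: E => <-; right; rewrite subnn /= xi; split=> //.
  by rewrite leqnn /= addnS ltnS leq_addr.
case: ifP => _ /(H1 _ _ _ erefl) [->|]; by [left|right].
Qed.

Definition phi (k : nat) (T : tableau) : nat := count (fun x => k < x) (reading_word T).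

Lemma F_phi i T U k : F i T = Some U -> phi k U = phi k T + (k == i).
Proof.
rewrite /F /phi; set w := reading_word T.
case E: (rum_pos _ _ _ _ _) => [p|] // [<-].
have [//|[/andP [_ hp] hn]] := rum_pos_spec E.
rewrite subn0 add0n in hp hn.
have Hs : sumn (map size (rev T)) = size w by rewrite /w /reading_word size_flatten.
have -> : reading_word (rev (reshape [seq size i | i <- rev T] (set_nth 0 w p i.+1)))
   = set_nth 0 w p i.+1.
  rewrite /reading_word revK reshapeKr // Hs size_set_nth.
  by rewrite geq_max hp leqnn.
rewrite count_set_nth_ltn // hn /=.
case: (ltngtP k i) => [h|h|->].
- by rewrite ltnS (ltnW h) addnK addn0.
- by rewrite ltnNge h /= !subn0.
- by rewrite ltnSn subn0.
Qed.

Lemma le_mono N T U : le_B N T U -> forall k, phi k T <= phi k U.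
Proof.
elim=> [x y [i [_ /F_phi H]] k| x k | x y z _ H1 _ H2 k] //.
- by rewrite H leq_addr.
- exact: leq_trans (H1 k) (H2 k).
Qed.

Lemma le_first N T U : le_B N T U -> T = U \/ exists i V, F i T = Some V /\ le_B N V U.
Proof.
move/(clos_rt_rt1n tableau). case=> [|y z [i [_ H]] H2]; first by left.
right; exists i, y; split=> //; exact: clos_rt1n_rt.
Qed.

Lemma le_zero N T U : le_B N T U -> (forall k, phi k T = phi k U) -> T = U.
Proof.
move=> /le_first [//|[i [V [/F_phi H /le_mono H2]]]] E.
by have := H2 i; rewrite H E eqxx addn1 ltnn.
Qed.

Lemma le_one N T U i : le_B N T U -> (forall k, phi k U = phi k T + (k == i)) -> F i T = Some U.
Proof.
move=> /le_first [<-|[j [V [FV LV]]]] E.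
  by have := E i; rewrite eqxx; lia.
have HV := fun k => F_phi k FV; have M := le_mono LV.
have ji : j = i.
  apply/eqP; apply: contraT => ne.
  by have := M j; rewrite HV E eqxx (negbTE ne) addn0 addn1 ltnn.
subst j; suff <- : V = U by [].
apply: (le_zero LV) => k; apply/eqP; rewrite HV E //.
Qed.

Definition shiftT s (W : tableau) : tableau := map (map (fun x => x + s)) W.
Definition topT s : tableau := [seq nseq 3 j | j <- iota 1 s].
Definition botT c b : tableau := [seq [:: j] | j <- iota c b].
Definition tab s W c b := topT s ++ shiftT s W ++ botT c b.

Definition inert i (w : seq nat) := all (fun x => (x != i) && (x != i.+1)) w.

Lemma rum_inertL i w1 w2 k op acc : inert i w1 ->
  rum_pos i (w1 ++ w2) k op acc = rum_pos i w2 (k + size w1) op acc.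
Proof.
elim: w1 k => [|x w1 IH] k /=; first by rewrite addn0.
by case/andP => /andP [/negbTE -> /negbTE ->] /IH ->; rewrite addnS.
Qed.

Lemma rum_inert i w k op acc : inert i w -> rum_pos i w k op acc = acc.
Proof.
elim: w k op => [|x w IH] k op //=.
by case/andP => /andP [/negbTE -> /negbTE ->] /IH ->.
Qed.

Lemma rum_inertR i w1 w2 k op acc : inert i w2 ->
  rum_pos i (w1 ++ w2) k op acc = rum_pos i w1 k op acc.
Proof.
move=> H; elim: w1 k op acc => [|x w1 IH] k op acc /=; first exact: rum_inert.
by rewrite !IH.
Qed.

Lemma rum_shiftk i w d k op acc :
  rum_pos i w (d + k) op (omap (addn d) acc) = omap (addn d) (rum_pos i w k op acc).
Proof.
elim: w k op acc => [|x w IH] k op acc //=.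
rewrite -addnS.
case: ifP => _; [case: ifP => _|case: ifP => _]; rewrite ?IH //.
by rewrite -(IH _ _ (Some k)).
Qed.

Lemma rum_shiftv i s w k op acc :
  rum_pos (i + s) (map (fun x => x + s) w) k op acc = rum_pos i w k op acc.
Proof.
elim: w k op acc => [|x w IH] k op acc //=.
by rewrite eqn_add2r -addSn eqn_add2r !IH.
Qed.

Lemma reshape_cat (sh1 sh2 : seq nat) (w1 w2 : seq nat) : sumn sh1 = size w1 ->
  reshape (sh1 ++ sh2) (w1 ++ w2) = reshape sh1 w1 ++ reshape sh2 w2.
Proof.
elim: sh1 w1 => [|n sh IH] w1 /=; first by case: w1.
move=> Hs.
rewrite take_cat drop_cat.
have Hn : n <= size w1 by rewrite -Hs leq_addr.
case: ltngtP Hn => // [h|h] _.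
  by rewrite IH // size_drop -Hs addKn.
rewrite h take_size drop_size subnn take0 drop0 cats0.
have := IH [::]; rewrite /= => -> //.
by move: Hs; rewrite h; lia.
Qed.

Lemma set_nth_cat0 (w1 w2 : seq nat) p y : p < size w2 ->
  set_nth 0 (w1 ++ w2) (size w1 + p) y = w1 ++ set_nth 0 w2 p y.
Proof. by move=> h; elim: w1 => //= x w1 ->. Qed.

Lemma set_nth_catl (w1 w2 : seq nat) p y : p < size w1 ->
  set_nth 0 (w1 ++ w2) p y = set_nth 0 w1 p y ++ w2.
Proof. by elim: w1 p => [|x w1 IH] [|p] //= h; rewrite IH. Qed.

Lemma set_nth_map s (w : seq nat) p y : p < size w ->
  set_nth 0 (map (fun x => x + s) w) p (y + s) = map (fun x => x + s) (set_nth 0 w p y).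
Proof. by elim: w p => [|x w IH] [|p] //= h; rewrite IH. Qed.

Lemma F_tab i s W c b : 0 < i -> i.+1 + s < c ->
  F (i + s) (tab s W c b) = omap (fun W' => tab s W' c b) (F i W).
Proof.
move=> i0 ic.
rewrite /F /tab /reading_word !rev_cat !flatten_cat.
set wb := flatten (rev (botT c b)); set wt := flatten (rev (topT s)).
have Ib : inert (i + s) wb.
  rewrite /wb /botT -map_rev; apply/allP => x /flatten_mapP [j].
  rewrite mem_rev mem_iota => /andP [h _]; rewrite inE => /eqP ->; lia.
have It : inert (i + s) wt.
  rewrite /wt /topT -map_rev; apply/allP => x /flatten_mapP [j].
  rewrite mem_rev mem_iota => /andP [_ h] /nseqP [-> _]; lia.
have -> : flatten (rev (shiftT s W)) = map (fun x => x + s) (flatten (rev W)).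
  by rewrite /shiftT -map_rev map_flatten.
rewrite -!catA rum_inertL // rum_inertR // rum_shiftv.
have := rum_shiftk i (flatten (rev W)) (size wb) 0 0 None; rewrite addn0 /= => ->.
case E: (rum_pos i _ 0 0 None) => [p|] //=.
have [//|[/andP [_ hp] _]] := rum_pos_spec E.
rewrite ?subn0 ?add0n in hp.
rewrite set_nth_cat0; last by rewrite size_cat size_map ltn_addr.
rewrite set_nth_catl ?size_map // -addSn set_nth_map //.
rewrite !map_cat.
have Hb : sumn (map size (rev (botT c b))) = size wb by rewrite /wb size_flatten.
have Hw : sumn (map size (rev (shiftT s W))) = size (map (fun x => x + s) (set_nth 0 (flatten (rev W)) p i.+1)).
  rewrite size_map size_set_nth /shiftT -map_rev -map_comp.
  rewrite (eq_map (g := size) (fun r => size_map _ r)).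
  have : sumn (map size (rev W)) = size (flatten (rev W)) by rewrite size_flatten.
  by rewrite map_rev => ->; rewrite (maxn_idPr hp).
rewrite reshape_cat // reshape_cat // /wb /wt !flattenK.
have -> : [seq size i | i <- rev (shiftT s W)] = [seq size i | i <- rev W].
  by rewrite /shiftT -map_rev -map_comp; apply: eq_map => r /=; rewrite size_map.
by rewrite -map_reshape !rev_cat !revK /shiftT map_rev catA; rewrite map_rev.
Qed.

Definition colrel (r1 r2 : seq nat) :=
  (size r2 <= size r1) && all (fun j => nth 0 r1 j < nth 0 r2 j) (iota 0 (size r2)).

Definition wok (W : tableau) :=
  [&& all (fun r => sorted leq r) W, all (all (fun x => (1 <= x) && (x <= 5))) W,
      path colrel (nseq 3 0) W,
      0 < size (last (nseq 3 0) W) & nth 0 (last (nseq 3 0) W) 0 <= 5].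

Lemma colrel_shift s r1 r2 :
  colrel (map (fun x => x + s) r1) (map (fun x => x + s) r2) = colrel r1 r2.
Proof.
rewrite /colrel !size_map; case: leqP => //= h.
apply: eq_in_all => j; rewrite mem_iota add0n => /andP [_ hj].
by rewrite !(nth_map 0) ?ltn_add2r //; exact: leq_trans hj h.
Qed.

Lemma top_path a s : path colrel (nseq 3 a) [seq nseq 3 j | j <- iota a.+1 s].
Proof.
elim: s a => [|s IH] a //=.
by rewrite IH andbT /colrel /= !ltnSn.
Qed.

Lemma top_last a s : last (nseq 3 a) [seq nseq 3 j | j <- iota a.+1 s] = nseq 3 (a + s).
Proof.
elim: s a => [|s IH] a /=; first by rewrite addn0.
by rewrite IH addSnnS.
Qed.

Lemma bot_path r c b : (b = 0) \/ (0 < size r /\ nth 0 r 0 < c) ->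
  path colrel r [seq [:: j] | j <- iota c b].
Proof.
elim: b r c => [|b IH] r c //= [//|[h1 h2]].
rewrite IH; last by right.
by rewrite andbT /colrel /= h1 h2.
Qed.

Lemma ssyt_tab N s W c b :
  c = s + 6 -> s + 5 <= N.+1 -> c + b <= N.+2 -> wok W ->
  is_ssyt N (nseq s 3 ++ map size W ++ nseq b 1) (tab s W c b).
Proof.
move=> hc h5 hb /and5P [Ws Wr Wp Wl1 Wl2].
apply/and4P; split.
- rewrite /tab !map_cat /topT /botT /shiftT -!map_comp.
  have -> : [seq (size \o nseq 3) i | i <- iota 1 s] = nseq s 3.
    by rewrite -[in RHS](size_iota 1 s); elim: (iota 1 s) => [|x l IH] //=; rewrite IH.
  have -> : [seq (size \o (fun j => [:: j])) i | i <- iota c b] = nseq b 1.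
    by rewrite -[in RHS](size_iota c b); elim: (iota c b) => [|x l IH] //=; rewrite IH.
  by rewrite (eq_map (g := size) (fun r => size_map _ r)).
- rewrite /tab !all_cat; apply/and3P; split.
  + by apply/allP => r /mapP [j _ ->]; rewrite /= leqnn.
  + apply/allP => r /mapP [r0 /(allP Ws) h ->].
    by rewrite sorted_map; apply: sub_sorted h => x y /=; rewrite leq_add2r.
  + by apply/allP => r /mapP [j _ ->].
- rewrite /tab !all_cat; apply/and3P; split.
  + apply/allP => r /mapP [j]; rewrite mem_iota => /andP [h1 h2] ->.
    apply/allP => x /nseqP [-> _]; apply/andP; split => //; lia.
  + apply/allP => r /mapP [r0 /(allP Wr) h ->].
    apply/allP => x /mapP [y /(allP h) /andP [h1 h2] ->]; apply/andP; split; lia.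
  + apply/allP => r /mapP [j]; rewrite mem_iota => /andP [h1 h2] ->.
    rewrite /= andbT; apply/andP; split; lia.
- have P : path colrel (nseq 3 0) (tab s W c b).
    rewrite /tab cat_path top_path /= /topT top_last add0n cat_path.
    have -> : nseq 3 s = map (fun x => x + s) (nseq 3 0) by [].
    rewrite /shiftT path_map (eq_path (e' := colrel)) ?Wp /=; last first.
      by move=> r1 r2 /=; rewrite colrel_shift.
    have -> : [:: 0+s; 0+s; 0+s] = map (fun x => x + s) (nseq 3 0) by [].
    rewrite last_map; apply: bot_path.
    case: b hb => [|b] hb; [by left | right].
    by rewrite size_map (nth_map 0) //; split => //; lia.
  have /sortedP Hs := path_sorted P.
  apply/allP => k; rewrite mem_iota add0n => /andP [_ hk].
  have /andP [_ H] : colrel (nth [::] (tab s W c b) k) (nth [::] (tab s W c b) k.+1) by apply: Hs; lia.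
  exact: H.
Qed.

Lemma notlat N (P : pred tableau) T U V1 V2 :
  P T -> P U -> P V1 -> P V2 -> le_B N T V1 -> le_B N U V1 -> le_B N T V2 -> le_B N U V2 ->
  (forall J, le_B N T J -> le_B N U J -> le_B N J V1 -> le_B N J V2 -> False) ->
  ~ is_lattice P (le_B N).
Proof.
move=> PT PU P1 P2 L1 L2 L3 L4 H /(_ T U PT PU) [[J [PJ TJ UJ HJ]] _].
exact: (H J TJ UJ (HJ V1 P1 L1 L2) (HJ V2 P2 L3 L4)).
Qed.

Lemma caseA_abs N T U V1 V2 X1 Y1 a1 a2 a3 :
  F a2 U = Some V1 -> F a1 U = Some X1 -> F a2 X1 = Some V2 ->
  F a2 T = Some Y1 -> F a3 Y1 = Some V1 -> F a3 T = None -> F a1 V1 <> Some V2 ->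
  forall J, le_B N T J -> le_B N U J -> le_B N J V1 -> le_B N J V2 -> False.
Proof.
move=> f1 f2 f3 f4 f5 f6 f7 J TJ UJ JV1 JV2.
have e1 := fun k => F_phi k f1; have e2 := fun k => F_phi k f2.
have e3 := fun k => F_phi k f3; have e4 := fun k => F_phi k f4.
have e5 := fun k => F_phi k f5.
have m1 := le_mono UJ; have m2 := le_mono JV1; have m3 := le_mono JV2.
case: (boolP (phi a2 J == phi a2 U)) => [/eqP h|h].
  have JU : J = U.
    symmetry; apply: (le_zero UJ) => k; apply/eqP; rewrite eqn_leq m1 /=.
    case: (eqVneq k a2) => [->|ne]; first by rewrite h.
    by have := m2 k; rewrite e1 (negbTE ne) addn0.
  subst J.
  have := le_one TJ (i := a3); rewrite f6 => H; suff: None = Some U by [].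
  apply: H => k; have := e5 k; rewrite e4 e1; lia.
have JV : J = V1.
  apply: (le_zero JV1) => k; apply/eqP; rewrite eqn_leq m2 /=.
  rewrite e1; case: (eqVneq k a2) => [->|ne].
    by have := m2 a2; have := m1 a2; rewrite e1 eqxx; lia.
  by rewrite addn0 m1.
subst J; apply: f7; apply: (le_one JV2) => k.
have := e3 k; have := e2 k; have := e1 k; lia.
Qed.

Lemma caseB_abs N T U V1 V2 Y1 a1 a2 a3 : a1 != a3 ->
  F a3 U = Some V1 -> F a1 U = Some V2 ->
  F a3 T = Some Y1 -> F a2 Y1 = Some V1 -> F a2 T = None ->
  forall J, le_B N T J -> le_B N U J -> le_B N J V1 -> le_B N J V2 -> False.
Proof.
move=> ne f1 f2 f3 f4 f5 J TJ UJ JV1 JV2.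
have e1 := fun k => F_phi k f1; have e2 := fun k => F_phi k f2.
have e3 := fun k => F_phi k f3; have e4 := fun k => F_phi k f4.
have m1 := le_mono UJ; have m2 := le_mono JV1; have m3 := le_mono JV2.
have JU : J = U.
  symmetry; apply: (le_zero UJ) => k; apply/eqP; rewrite eqn_leq m1 /=.
  have := m2 k; have := m3 k; rewrite e1 e2.
  case: (eqVneq k a3) => [->|n3]; first by rewrite eq_sym (negbTE ne) addn0.
  by rewrite addn0.
subst J.
have := le_one TJ (i := a2); rewrite f5 => H; suff: None = Some U by [].
apply: H => k; have := e4 k; rewrite e3 e1; lia.
Qed.

Definition TA : tableau := [:: [:: 1; 1; 3]; [:: 2; 5]; [:: 4]; [:: 5]].
Definition UA : tableau := [:: [:: 1; 1; 4]; [:: 2; 5]; [:: 4]; [:: 5]].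
Definition V1A : tableau := [:: [:: 1; 1; 4]; [:: 3; 5]; [:: 4]; [:: 5]].
Definition V2A : tableau := [:: [:: 1; 3; 4]; [:: 2; 5]; [:: 4]; [:: 5]].
Definition X1A : tableau := [:: [:: 1; 2; 4]; [:: 2; 5]; [:: 4]; [:: 5]].
Definition Y1A : tableau := [:: [:: 1; 1; 3]; [:: 3; 5]; [:: 4]; [:: 5]].
Definition ZA : tableau := [:: [:: 1; 2; 4]; [:: 3; 5]; [:: 4]; [:: 5]].
Definition P1A : tableau := [:: [:: 1; 2; 3]; [:: 2; 5]; [:: 4]; [:: 5]].
Definition P2A : tableau := [:: [:: 1; 3; 3]; [:: 2; 5]; [:: 4]; [:: 5]].

Definition TB : tableau := [:: [:: 1; 1; 2]; [:: 2; 3; 4]; [:: 3; 5]; [:: 5]].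
Definition UB : tableau := [:: [:: 1; 1; 3]; [:: 2; 3; 4]; [:: 3; 5]; [:: 5]].
Definition V1B : tableau := [:: [:: 1; 1; 3]; [:: 2; 4; 4]; [:: 3; 5]; [:: 5]].
Definition V2B : tableau := [:: [:: 1; 2; 3]; [:: 2; 3; 4]; [:: 3; 5]; [:: 5]].
Definition Y1B : tableau := [:: [:: 1; 1; 2]; [:: 2; 4; 4]; [:: 3; 5]; [:: 5]].
Definition Q1B : tableau := [:: [:: 1; 2; 2]; [:: 2; 3; 4]; [:: 3; 5]; [:: 5]].

Lemma Fg i s W W' b : 0 < i < 5 -> F i W = Some W' ->
  F (i + s) (tab s W (s + 6) b) = Some (tab s W' (s + 6) b).
Proof. move=> /andP [h1 h2] E; rewrite F_tab // ?E //; lia. Qed.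

Lemma Fg0 i s W b : 0 < i < 5 -> F i W = None ->
  F (i + s) (tab s W (s + 6) b) = None.
Proof. move=> /andP [h1 h2] E; rewrite F_tab // ?E //; lia. Qed.

Lemma stepg N i s W W' b : 0 < i < 5 -> i + s <= N -> F i W = Some W' ->
  le_B N (tab s W (s + 6) b) (tab s W' (s + 6) b).
Proof.
move=> h1 h2 E; apply: rt_step; exists (i + s); split; last exact: Fg.
apply/andP; split; lia.
Qed.

Lemma le_tr N x y z : le_B N x y -> le_B N y z -> le_B N x z.
Proof. exact: rt_trans. Qed.

Lemma tab_inj s W W' c b : size W = size W' -> tab s W c b = tab s W' c b -> W = W'.
Proof.
move=> hs /eqP; rewrite /tab eqseq_cat // => /andP [_].
rewrite eqseq_cat ?size_map // => /andP [/eqP h _].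
apply: (inj_map (inj_map (@addIn s))) h.
Qed.

Lemma nseqS3 (s : nat) (x : nat) : nseq s.+1 x = nseq s x ++ [:: x].
Proof. by elim: s => //= s <-. Qed.

Unset Implicit Arguments.

Theorem lemma5p7 (lam : seq nat) (n m : nat) :
  is_partition lam -> 4 <= size lam -> size lam <= n ->
  1 <= m <= size lam - 2 ->
  lam = nseq m 3 ++ 2 :: nseq (size lam - m - 1) 1 ->
  ~ is_lattice (B n lam) (le_B n).
Proof.
move=> _; move: (size lam) => L H4 Hn /andP [Hm1 Hm2] ->.
case: (leqP 2 (L - m - 1)) => hk.
-
  pose s := m.-1; pose b := L - m - 3.
  have -> : nseq m 3 ++ 2 :: nseq (L - m - 1) 1 = nseq s 3 ++ map size TA ++ nseq b 1.
    have -> : m = s.+1 by rewrite /s; lia.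
    have -> : L - s.+1 - 1 = b.+2 by rewrite /b /s; lia.
    by rewrite nseqS3 -catA.
  have hs5 : s + 5 <= n.+1 by rewrite /s; lia.
  have hcb : s + 6 + b <= n.+2 by rewrite /s /b; lia.
  have hs4 : 3 + s <= n by rewrite /s; lia.
  have mem : forall W, wok W -> map size W = map size TA ->
      B n (nseq s 3 ++ map size TA ++ nseq b 1) (tab s W (s + 6) b).
    by move=> W hW <-; apply: ssyt_tab.
  apply: (@notlat n _ (tab s TA (s+6) b) (tab s UA (s+6) b) (tab s V1A (s+6) b) (tab s V2A (s+6) b)).
  + by apply: mem; vm_compute.
  + by apply: mem; vm_compute.
  + by apply: mem; vm_compute.
  + by apply: mem; vm_compute.
  + apply: (le_tr (y := tab s Y1A (s+6) b)); first by apply: (@stepg n 2); [|lia|vm_compute].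
    by apply: (@stepg n 3); [|lia|vm_compute].
  + by apply: (@stepg n 2); [|lia|vm_compute].
  + apply: (le_tr (y := tab s P1A (s+6) b)); first by apply: (@stepg n 1); [|lia|vm_compute].
    apply: (le_tr (y := tab s P2A (s+6) b)); first by apply: (@stepg n 2); [|lia|vm_compute].
    by apply: (@stepg n 3); [|lia|vm_compute].
  + apply: (le_tr (y := tab s X1A (s+6) b)); first by apply: (@stepg n 1); [|lia|vm_compute].
    by apply: (@stepg n 2); [|lia|vm_compute].
  + apply: (@caseA_abs n _ _ _ _ (tab s X1A (s+6) b) (tab s Y1A (s+6) b) (1 + s) (2 + s) (3 + s)).
    * by apply: Fg.
    * by apply: Fg.
    * by apply: Fg.
    * by apply: Fg.
    * by apply: Fg.
    * by apply: Fg0.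
    * rewrite (@Fg 1 s V1A ZA) // => [[/tab_inj]] /(_ erefl); by [].
-
  have hm : 2 <= m by lia.
  pose s := m - 2; pose b := 0.
  have -> : nseq m 3 ++ 2 :: nseq (L - m - 1) 1 = nseq s 3 ++ map size TB ++ nseq b 1.
    have -> : m = s.+2 by rewrite /s; lia.
    have -> : L - s.+2 - 1 = 1 by rewrite /s; lia.
    by rewrite nseqS3 nseqS3 -!catA.
  have hs5 : s + 5 <= n.+1 by rewrite /s; lia.
  have hcb : s + 6 + b <= n.+2 by rewrite /s /b; lia.
  have hs4 : 3 + s <= n by rewrite /s; lia.
  have mem : forall W, wok W -> map size W = map size TB ->
      B n (nseq s 3 ++ map size TB ++ nseq b 1) (tab s W (s + 6) b).
    by move=> W hW <-; apply: ssyt_tab.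
  apply: (@notlat n _ (tab s TB (s+6) b) (tab s UB (s+6) b) (tab s V1B (s+6) b) (tab s V2B (s+6) b)).
  + by apply: mem; vm_compute.
  + by apply: mem; vm_compute.
  + by apply: mem; vm_compute.
  + by apply: mem; vm_compute.
  + apply: (le_tr (y := tab s Y1B (s+6) b)); first by apply: (@stepg n 3); [|lia|vm_compute].
    by apply: (@stepg n 2); [|lia|vm_compute].
  + by apply: (@stepg n 3); [|lia|vm_compute].
  + apply: (le_tr (y := tab s Q1B (s+6) b)); first by apply: (@stepg n 1); [|lia|vm_compute].
    by apply: (@stepg n 2); [|lia|vm_compute].
  + by apply: (@stepg n 1); [|lia|vm_compute].
  + apply: (@caseB_abs n _ _ _ _ (tab s Y1B (s+6) b) (1 + s) (2 + s) (3 + s)).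
    * apply/eqP; lia.
    * by apply: Fg.
    * by apply: Fg.
    * by apply: Fg.
    * by apply: Fg.
    * by apply: Fg0.
Qed.
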